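(* Let $G$ be a finite simple graph, let $s\ge1$ and let $e_1,\ldots,e_s$ be edges of $G$, not necessarily distinct. Suppose $(I(G)^{s+1}:e_1\cdots e_s)$ is a squarefree monomial ideal. Then for each $1\le i\le s$, \[(I(G)^{s+1}:e_1\cdots e_s)=\Big((I(G)^2:e_i)^s:\prod_{j\neq i}e_j\Big).\]
   Context: $I(G)=(uv\mid\{u,v\}\in E(G))\subseteq K[V(G)]$ is the edge ideal over a field $K$; each edge $e=\{a,b\}$ is identified with the monomial $ab$. *)

(* Defs.v *)
From HB Require Import structures.
From mathcomp Require Import all_boot all_algebra.
From mathcomp Require Import mpoly.
Set Implicit Arguments. Unset Strict Implicit. Unset Printing Implicit Defensive.
Import GRing.Theory.
Local Open Scope ring_scope.

Section Ideals.
Variables (n : nat) (K : fieldType).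
Notation P := {mpoly K[n]}.

Definition ideal_gen (S : P -> Prop) : P -> Prop :=
  fun p => exists gs : seq (P * P),
    (forall x, x \in gs -> S x.2) /\ p = \sum_(x <- gs) x.1 * x.2.

Definition ideal_mul (I J : P -> Prop) : P -> Prop :=
  ideal_gen (fun p => exists a b, I a /\ J b /\ p = a * b).

Definition ideal_pow (I : P -> Prop) (k : nat) : P -> Prop :=
  iter k (ideal_mul I) (ideal_gen (fun p => p = 1)).

Definition ideal_colon (I : P -> Prop) (f : P) : P -> Prop :=
  fun p => I (p * f).

Definition ideal_eq (I J : P -> Prop) : Prop := forall p, I p <-> J p.

Definition edge_mon (e : 'I_n * 'I_n) : P := 'X_e.1 * 'X_e.2.

Definition edge_ideal (G : rel 'I_n) : P -> Prop :=
  ideal_gen (fun p => exists a b, G a b /\ p = 'X_a * 'X_b).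

Definition squarefree_mon (m : 'X_{1..n}) : Prop := forall i, (m i <= 1)%N.

Definition squarefree_monomial_ideal (I : P -> Prop) : Prop :=
  exists S : 'X_{1..n} -> Prop, (forall m, S m -> squarefree_mon m) /\
    ideal_eq I (ideal_gen (fun p => exists m, S m /\ p = 'X_[m])).

End Ideals.

Definition simple_graph n (G : rel 'I_n) : Prop :=
  (forall a b, G a b = G b a) /\ (forall a, ~~ G a a).

(* Main.v *)
Require Import Defs.
From HB Require Import structures.
From mathcomp Require Import all_boot all_algebra.
From mathcomp Require Import mpoly.
From mathcomp Require Import zify.
Set Implicit Arguments. Unset Strict Implicit. Unset Printing Implicit Defensive.

Ltac splitq := repeat (match goal with |- context [ (?a == ?b) ] =>
   let H := fresh "H" in (case: (eqVneq a b) => [H|/eqP H]; [try rewrite H; clear H|revert H]) end);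
   rewrite ?eqxx /=.
Ltac genmon := repeat match goal with |- context [ @fun_of_multinom ?k ?m ?i ] =>
  let z := fresh "z" in generalize (@fun_of_multinom k m i); intro z end.
Ltac clearall := repeat match goal with H : _ |- _ => clear H end.
Ltac fin := first [ intros; exfalso; match goal with H : ?a = ?a -> False |- _ => exact (H erefl) end
  | intros; done | genmon; clearall; intros; lia ].

Section Comb.
Variable n : nat.
Variable G : rel 'I_n.
Hypothesis Gsym : forall a b, G a b = G b a.
Hypothesis Girr : forall a, ~~ G a a.

Local Notation mon := ('X_{1..n}).
Local Notation V := 'I_n.

Definition ev (f : V * V) : mon := (U_(f.1) + U_(f.2))%MM.
Definition msum (X : seq (V * V)) : mon := (\big[+%MM/0%MM]_(f <- X) ev f)%MM.
Definition isE (f : V * V) : bool := G f.1 f.2.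
Definition Pk (k : nat) (m : mon) : Prop :=
  exists X, [/\ size X = k, all isE X & (msum X <= m)%MM].

Lemma msum_nil : msum [::] = 0%MM. Proof. by rewrite /msum big_nil. Qed.
Lemma msum_cons f X : msum (f :: X) = (ev f + msum X)%MM.
Proof. by rewrite /msum big_cons. Qed.
Lemma msum_cat X Y : msum (X ++ Y) = (msum X + msum Y)%MM.
Proof. by rewrite /msum big_cat. Qed.
Lemma msum_perm X Y : perm_eq X Y -> msum X = msum Y.
Proof. exact: perm_big. Qed.
Lemma msum_rem f X : f \in X -> msum X = (ev f + msum (rem f X))%MM.
Proof. by move=> fX; rewrite (msum_perm (perm_to_rem fX)) msum_cons. Qed.
Lemma evE f i : ev f i = ((f.1 == i) + (f.2 == i))%N.
Proof. by rewrite mnmDE !mnm1E. Qed.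

Lemma msum_pos X a : (0 < msum X a)%N -> exists2 f, f \in X & (f.1 == a) || (f.2 == a).
Proof.
elim: X => [|f X IH]; first by rewrite msum_nil mnm0E.
rewrite msum_cons mnmDE evE.
case: (boolP ((f.1 == a) || (f.2 == a))) => [H _|]; first by exists f; rewrite ?inE ?eqxx.
case/norP => /negbTE -> /negbTE -> /= /IH [g gX Hg]; exists g => //.
by rewrite inE gX orbT.
Qed.

Lemma mdeg_msum X : mdeg (msum X) = (2 * size X)%N.
Proof.
elim: X => [|f X IH]; first by rewrite msum_nil mdeg0.
by rewrite msum_cons mdegD IH /ev mdegD !mdeg1 /=; lia.
Qed.

Lemma mdeg_le (m1 m2 : mon) : (m1 <= m2)%MM -> (mdeg m1 <= mdeg m2)%N.
Proof. by move/mnm_lepP=> H; rewrite !mdegE; apply: leq_sum => i _; apply: H. Qed.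

Lemma Pk_le k (m m' : mon) : Pk k m -> (m <= m')%MM -> Pk k m'.
Proof. by case=> X [h1 h2 h3] h; exists X; split => //; apply: lepm_trans h. Qed.

Lemma lem_add2 (a b c d : mon) : (a <= b)%MM -> (c <= d)%MM -> (a + c <= b + d)%MM.
Proof.
move=> /mnm_lepP h1 /mnm_lepP h2; apply/mnm_lepP=> i; rewrite !mnmDE.
by apply: leq_add.
Qed.

Lemma Pk_add k1 k2 m1 m2 : Pk k1 m1 -> Pk k2 m2 -> Pk (k1 + k2) (m1 + m2)%MM.
Proof.
case=> X [h1 h2 h3] [Y [g1 g2 g3]]; exists (X ++ Y); split.
- by rewrite size_cat h1 g1.
- by rewrite all_cat h2 g2.
- by rewrite msum_cat lem_add2.
Qed.

Definition ends (fo : (V * V) * bool) : V * V :=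
  if fo.2 then fo.1 else (fo.1.2, fo.1.1).
Fixpoint ecp (u v : V) (P : seq ((V * V) * bool)) : bool :=
  if P is fo :: P' then G u (ends fo).1 && ecp (ends fo).2 v P' else G u v.
Definition usable (P : seq ((V * V) * bool)) (F : seq (V * V)) :=
  forall e, (count_mem e (map fst P) <= count_mem e F)%N.

Lemma ecp_cat u v P1 fo P2 :
  ecp u v (P1 ++ fo :: P2) = ecp u (ends fo).1 P1 && ecp (ends fo).2 v P2.
Proof. by elim: P1 u => [|g P1 IH] u //=; rewrite IH andbA. Qed.

Definition flip (fo : (V * V) * bool) := (fo.1, ~~ fo.2).

Lemma ends_flip fo : ends (flip fo) = ((ends fo).2, (ends fo).1).
Proof. by case: fo => [[a b] []]. Qed.

Lemma ecp_rev u v P : ecp u v P -> ecp v u (rev (map flip P)).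
Proof.
elim: P u => [|fo P IH] u /=; first by rewrite Gsym.
case/andP=> h1 h2; rewrite rev_cons -cats1 ecp_cat ends_flip /=.
by rewrite IH //= Gsym.
Qed.

Lemma usable_rev P F : usable P F -> usable (rev (map flip P)) F.
Proof.
move=> h e; rewrite map_rev count_rev -map_comp.
by have -> : fst \o flip = fst by []; apply: h.
Qed.

Lemma count_rem_mem (T : eqType) (f e : T) (F : seq T) : f \in F ->
  count_mem e F = ((f == e) + count_mem e (rem f F))%N.
Proof. by move=> fF; rewrite (permP (perm_to_rem fF)) /=. Qed.

Lemma ev_ends fo : ev (ends fo) = ev fo.1.
Proof. by case: fo => [[a b] []] //=; rewrite /ev addmC. Qed.

Lemma ecp_Pk P : forall F u v, all isE F -> ecp u v P -> usable P F ->
  Pk (size F).+1 (U_(u) + U_(v) + msum F)%MM.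
Proof.
elim: P => [|fo P IH] F u v hF /=.
  move=> huv _; exists ((u, v) :: F); split => //=; first by rewrite /isE /= huv.
  by rewrite msum_cons /ev /= lepm_refl.
case/andP=> h1 h2 hu.
have fF : fo.1 \in F.
  by have := hu fo.1; rewrite /= eqxx -has_pred1 has_count; apply: leq_trans; rewrite add1n.
have hF' : all isE (rem fo.1 F).
  by apply/allP=> x /mem_rem xF; apply: (allP hF).
have hu' : usable P (rem fo.1 F).
  by move=> e; have := hu e; rewrite /= (count_rem_mem e fF) leq_add2l.
case: (IH _ _ _ hF' h2 hu') => X [s1 s2 s3].
exists ((u, (ends fo).1) :: X); split.
- by rewrite /= s1 size_rem //; case: (F) fF.
- by rewrite /= s2 andbT.
rewrite msum_cons (msum_rem fF) -ev_ends.
move/mnm_lepP: s3 => s3; apply/mnm_lepP => i; move: (s3 i).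
rewrite /ev !mnmDE !mnm1E /=; lia.
Qed.


Definition Concl F (x : mon) := exists u v P,
  [/\ ecp u v P, usable P F & (U_(u) + U_(v) <= x)%MM].

Lemma usable_rem P F f : f \in F -> usable P (rem f F) -> usable P F.
Proof.
move=> fF h e; apply: leq_trans (h e) _; rewrite (count_rem_mem e fF).
exact: leq_addl.
Qed.

Lemma other_end (g : V * V) w : (g.1 == w) || (g.2 == w) -> isE g ->
  let p := if g.1 == w then g.2 else g.1 in
  [/\ ev g = (U_(w) + U_(p))%MM, G w p, p != w &
      ends (g, g.1 == w) = (w, p)].
Proof.
case: g => a b /=; rewrite /isE /ev /ends /=.
case: (eqVneq a w) => [->|naw] /= hw hG.
  by split => //; apply: contraTneq hG => ->; rewrite Girr.
by move/eqP: hw hG => -> hG; split; [exact: addmC | by rewrite Gsym | exact: naw | by []].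
Qed.

Lemma BT_gen F X x :
  (forall F' X' x', (size F' < size F)%N -> all isE F' -> all isE X' ->
     (size F' < size X')%N -> (msum X' <= x' + msum F')%MM -> Concl F' x') ->
  all isE F -> all isE X -> (size F < size X)%N -> (msum X <= x + msum F)%MM ->
  Concl F x.
Proof.
move=> IH hF hX hs hle.
have [w hw] : exists w, (msum F w < msum X w)%N.
  case: (boolP [exists w, (msum F w < msum X w)%N]) => [/existsP [w hw]|/existsPn hn].
    by exists w.
  have : (msum X <= msum F)%MM by apply/mnm_lepP => i; rewrite leqNgt hn.
  move/mdeg_le; rewrite !mdeg_msum; lia.
move/mnm_lepP: (hle) => hle'.
have xw : (0 < x w)%N by move: (hle' w); rewrite mnmDE; lia.
have [g gX hg] := @msum_pos X w (leq_ltn_trans (leq0n _) hw).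
have [evg Gwp pw eg] := other_end hg (allP hX g gX).
move: (if g.1 == w then g.2 else g.1) evg Gwp pw eg => p evg Gwp pw eg.
case: (posnP (x p)) => [xp0|xp]; last first.
  exists w, p, [::]; split => //.
  apply/mnm_lepP => i; move: xw xp pw; rewrite !mnmDE !mnm1E.
  splitq; fin.
have Fp : (0 < msum F p)%N.
  move: (hle' p); rewrite mnmDE xp0 (msum_rem gX) mnmDE evg !mnmDE !mnm1E eqxx /=.
  lia.
have [f fF hf] := msum_pos Fp.
have [evf Gpc cp ef] := other_end hf (allP hF f fF).
move: (if f.1 == p then f.2 else f.1) evf Gpc cp ef => c evf Gpc cp ef.
have sF : size F = (size (rem f F)).+1 by rewrite size_rem //; case: (F) fF.
have sX : size X = (size (rem g X)).+1 by rewrite size_rem //; case: (X) gX.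
have hF0 : all isE (rem f F) by apply/allP=> y /mem_rem yF; apply: (allP hF).
have hX1 : all isE (rem g X) by apply/allP=> y /mem_rem yX; apply: (allP hX).
have hle1 : (msum (rem g X) <= (x - U_(w) + U_(c)) + msum (rem f F))%MM.
  apply/mnm_lepP => i; move: (hle' i) xw.
  rewrite (msum_rem gX) (msum_rem fF) evg evf !mnmDE !mnmBE !mnm1E.
  splitq; fin.
have hsz1 : (size (rem f F) < size F)%N by rewrite sF.
have hsz2 : (size (rem f F) < size (rem g X))%N by rewrite -ltnS -sF -sX.
have [u' [v' [P0 [e1 e2 e3]]]] := IH _ _ _ hsz1 hF0 hX1 hsz2 hle1.
have hfin : forall u v P, ecp u v P -> usable P (rem f F) ->
    (U_(u) + U_(v) <= x - U_(w) + U_(c))%MM -> u = c -> Concl F x.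
  move=> u v P h1 h2 h3 uc; subst u.
  exists w, v, ((f, f.1 == p) :: P); split.
  - by rewrite /= ef /= Gwp h1.
  - move=> e /=; have := h2 e; rewrite (count_rem_mem e fF).
    by rewrite leq_add2l.
  - move/mnm_lepP: h3 => h3; apply/mnm_lepP => i; move: (h3 i) xw.
    rewrite !mnmDE !mnmBE !mnm1E.
    splitq; fin.
case: (eqVneq u' c) => [uc|uc]; first exact: hfin e1 e2 e3 uc.
case: (eqVneq v' c) => [vc|vc].
  apply: (hfin v' u' _ (ecp_rev e1) (usable_rev e2)) => //.
  by rewrite addmC.
exists u', v', P0; split => //.
- exact: usable_rem fF e2.
- move/mnm_lepP: e3 => e3; apply/mnm_lepP => i; move: (e3 i) uc vc.
  rewrite !mnmDE !mnmBE !mnm1E.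
  splitq; fin.
Qed.

Lemma BT F X x : all isE F -> all isE X -> (size F < size X)%N ->
  (msum X <= x + msum F)%MM -> Concl F x.
Proof.
move: {2}(size F) (leqnn (size F)) => k; elim: k F X x => [|k IH] F X x hk.
  apply: BT_gen => F' X' x' h; lia.
apply: BT_gen => F' X' x' h; apply: IH; lia.
Qed.


Lemma split_has (T : Type) (p : pred T) s : has p s ->
  exists s1 x s2, [/\ s = s1 ++ x :: s2, p x & ~~ has p s1].
Proof.
elim: s => //= y s IH; case: (boolP (p y)) => [py _|npy /IH [s1 [x [s2 [-> px hs1]]]]].
  by exists [::], y, s.
by exists (y :: s1), x, s2; split; rewrite //= negb_or npy hs1.
Qed.

Definition NoSelf F := forall w P, ecp w w P -> usable P F -> False.

Lemma Core_gen F ab P u v : ab \in F -> NoSelf F ->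
  (forall P', (size P' < size P)%N -> forall u v, ecp u v P' -> usable P' (ab :: F) ->
      exists P'', ecp u v P'' /\ usable P'' F) ->
  ecp u v P -> usable P (ab :: F) -> exists P', ecp u v P' /\ usable P' F.
Proof.
move=> abF hns IH hP hu.
case: (leqP (count_mem ab (map fst P)) (count_mem ab F)) => hc.
  exists P; split => // e; have := hu e; rewrite /=.
  case: (eqVneq ab e) => [<-|ne] _; first exact: hc.
  by have := hu e; rewrite /= (negbTE ne).
pose q := fun fo : (V * V) * bool => fo.1 == ab.
have cq : count_mem ab (map fst P) = count q P by rewrite count_map.
have cF : (0 < count_mem ab F)%N by rewrite -has_count has_pred1.
have : has q P by rewrite has_count -cq; apply: leq_ltn_trans hc.
case/split_has => P1 [[f1 o1] [P2' [eP qf1 hP1]]].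
have cP : count q P = (count q P2').+1.
  move: hP1; rewrite eP count_cat /= qf1 has_count -leqNgt leqn0 => /eqP ->.
  by rewrite add0n add1n.
have : has q P2'.
  rewrite has_count; move: hc; rewrite cq cP ltnS => hc'.
  exact: leq_trans cF hc'.
case/split_has => P2 [[f2 o2] [P3 [eP2 qf2 _]]].
move: qf1 qf2; rewrite /q /= => /eqP ef1 /eqP ef2; subst f1 f2 P2' P.
move: hP; rewrite ecp_cat ecp_cat => /andP [h1 /andP [h2 h3]].
case: (eqVneq o1 o2) => [eo|no].
  subst o2; apply: (IH (P1 ++ (ab, o1) :: P3)).
  - by rewrite !size_cat /= size_cat /=; lia.
  - by rewrite ecp_cat h1 h3.
  - move=> e; apply: leq_trans (hu e); rewrite !map_cat !count_cat /= map_cat count_cat /=.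
    lia.
exfalso; apply: (hns (ends (ab, o1)).2 P2).
  have E : (ends (ab, o1)).2 = (ends (ab, o2)).1 by move: no; case: (o1); case: (o2).
  by rewrite {2}E.
move=> e; have := hu e; rewrite !map_cat !count_cat /= map_cat count_cat /=.
case: (ab == e) => /=; lia.
Qed.

Lemma Core F ab P u v : ab \in F -> NoSelf F ->
  ecp u v P -> usable P (ab :: F) -> exists P', ecp u v P' /\ usable P' F.
Proof.
move=> abF hns; move: {2}(size P) (leqnn (size P)) => k.
elim: k P u v => [|k IH] P u v hk; apply: Core_gen => // P' hP'.
  lia.
move=> u' v'; apply: IH; lia.
Qed.


Definition msplus (M N : mon -> Prop) : mon -> Prop :=
  fun m => exists a b, [/\ M a, N b & (a + b <= m)%MM].
Definition mpw (M : mon -> Prop) (k : nat) : mon -> Prop :=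
  iter k (msplus M) (fun _ => True).
Definition Edg (m : mon) : Prop := exists a b, G a b /\ (U_(a) + U_(b) <= m)%MM.

Lemma Pk_mpw k m : Pk k m <-> mpw Edg k m.
Proof.
elim: k m => [|k IH] m.
  split => // _; exists [::]; split => //; rewrite msum_nil.
  by apply/mnm_lepP => i; rewrite mnm0E.
split.
  case=> X [sX hX hle]; case: X sX hX hle => [|f X] // [sX] /andP [hf hX] hle.
  exists (ev f), (msum X); split.
  - by exists f.1, f.2; split => //; apply: lepm_refl.
  - by apply/IH; exists X; split => //; apply: lepm_refl.
  - by rewrite -msum_cons.
case=> a [b [[a0 [b0 [hG hab]]] /IH [X [sX hX hle]] h]].
exists ((a0, b0) :: X); split; first by rewrite /= sX.
  by rewrite /= hX andbT.
rewrite msum_cons; apply: lepm_trans h; exact: lem_add2.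
Qed.

Lemma Pk_split k x : Pk k.+1 x -> exists f Z, [/\ isE f, size Z = k, all isE Z &
   (ev f + msum Z <= x)%MM].
Proof.
case=> X [sX hX hle]; case: X sX hX hle => [|f Z] // [sZ] /andP [hf hZ] hle.
by exists f, Z; rewrite -msum_cons.
Qed.

Section GL.
Variable ab : V * V.
Hypothesis Gab : G ab.1 ab.2.
Definition Jset (y : mon) := Pk 2 (y + ev ab)%MM.

Lemma Jset_edge f : isE f -> Jset (ev f).
Proof.
move=> hf; exists [:: f; ab]; split => //=; first by rewrite hf /isE Gab.
by rewrite !msum_cons msum_nil addm0 lepm_refl.
Qed.

Lemma GL_H1 k x : Pk k.+1 x -> exists y z, [/\ Jset y, Pk k z & (y + z <= x)%MM].
Proof.
case/Pk_split => f [Z [hf sZ hZ hle]]; exists (ev f), (msum Z); split => //.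
  exact: Jset_edge.
by exists Z; split => //; apply: lepm_refl.
Qed.

Lemma GL_H2 k X x b : all isE X -> size X = k.+2 -> (msum X <= x + U_(b))%MM ->
  Pk k.+1 x.
Proof.
move=> hX sX /mnm_lepP hle.
case: (leqP (msum X b) (x b)) => hb.
  case: X hX sX hle hb => [|f X] //= /andP [hf hX] [sX] hle hb.
  exists X; split => //; apply/mnm_lepP => i; move: (hle i) hb.
  rewrite msum_cons !mnmDE !mnm1E; splitq; fin.
have [g gX hg] := @msum_pos X b (leq_ltn_trans (leq0n _) hb).
have [evg _ _ _] := other_end hg (allP hX g gX).
exists (rem g X); split.
- by rewrite size_rem // sX.
- by apply/allP=> y /mem_rem yX; apply: (allP hX).
apply/mnm_lepP => i; move: (hle i) hb; rewrite (msum_rem gX) evg !mnmDE !mnm1E.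
splitq; fin.
Qed.

Lemma GL k x : Pk k.+2 (x + ev ab)%MM ->
  exists y z, [/\ Jset y, Pk k z & (y + z <= x)%MM].
Proof.
case=> X [sX hX hle]; move/mnm_lepP: (hle) => hle'.
have nab : ab.1 <> ab.2 by move=> E; move: Gab; rewrite E (negbTE (Girr _)).
case: (leqP (msum X ab.1) (x ab.1)) => ha.
  apply: GL_H1; apply: (GL_H2 (b := ab.2) hX sX).
  apply/mnm_lepP => i; move: (hle' i) ha; rewrite /ev !mnmDE !mnm1E.
  move: nab; splitq; fin.
case: (leqP (msum X ab.2) (x ab.2)) => hb.
  apply: GL_H1; apply: (GL_H2 (b := ab.1) hX sX).
  apply/mnm_lepP => i; move: (hle' i) hb; rewrite /ev !mnmDE !mnm1E.
  move: nab; splitq; fin.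
have [g1 g1X hg1] := @msum_pos X ab.1 (leq_ltn_trans (leq0n _) ha).
have [evg1 Gap _ _] := other_end hg1 (allP hX g1 g1X).
move: (if g1.1 == ab.1 then g1.2 else g1.1) evg1 Gap => p evg1 Gap.
have sX1 : size (rem g1 X) = k.+1 by rewrite size_rem // sX.
have hX1 : all isE (rem g1 X) by apply/allP=> y /mem_rem yX; apply: (allP hX).
case: (eqVneq p ab.2) => [pb|pb].
  apply: GL_H1; exists (rem g1 X); split => //.
  apply/mnm_lepP => i; move: (hle' i); rewrite (msum_rem g1X) evg1 pb /ev !mnmDE !mnm1E.
  move: nab; splitq; fin.
have hb1 : (x ab.2 < msum (rem g1 X) ab.2)%N.
  by move: hb; rewrite (msum_rem g1X) evg1 !mnmDE !mnm1E (negbTE pb); move: nab; splitq; fin.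
have [g2 g2X hg2] := @msum_pos _ ab.2 (leq_ltn_trans (leq0n _) hb1).
have [evg2 Gbq _ _] := other_end hg2 (allP hX1 g2 g2X).
move: (if g2.1 == ab.2 then g2.2 else g2.1) evg2 Gbq => q evg2 Gbq.
exists (U_(p) + U_(q))%MM, (msum (rem g2 (rem g1 X))); split.
- exists [:: (ab.1, p); (ab.2, q)]; split => //=; first by rewrite /isE /= Gap Gbq.
  rewrite !msum_cons msum_nil /ev /=; apply/mnm_lepP => i; rewrite !mnmDE !mnm1E mnm0E.
  move: nab; splitq; fin.
- exists (rem g2 (rem g1 X)); split => //.
  + by rewrite size_rem // sX1.
  + by apply/allP=> y /mem_rem yX; apply: (allP hX1).
  + exact: lepm_refl.
apply/mnm_lepP => i; move: (hle' i).
rewrite (msum_rem g1X) (msum_rem g2X) evg1 evg2 /ev !mnmDE !mnm1E.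
move: nab; splitq; fin.
Qed.

End GL.

Section Main.
Variables (s : nat) (e : 'I_s -> V * V) (i0 : 'I_s).
Hypothesis he : forall j, G (e j).1 (e j).2.
Hypothesis s_pos : (0 < s)%N.

Definition Em : mon := (\big[+%MM/0%MM]_(j < s) ev (e j))%MM.
Definition E'm : mon := (\big[+%MM/0%MM]_(j < s | j != i0) ev (e j))%MM.
Definition El := [seq e j | j <- enum 'I_s].
Local Notation ab := (e i0).

Lemma EmE : Em = (ev ab + E'm)%MM.
Proof. by rewrite /Em (bigD1 i0). Qed.

Lemma msum_El : msum El = Em.
Proof. by rewrite /msum big_map big_enum. Qed.

Lemma size_El : size El = s.
Proof. by rewrite size_map size_enum_ord. Qed.

Lemma El_isE : all isE El.
Proof. by apply/allP => f /mapP [j _ ->]; apply: he. Qed.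

Lemma ab_El : ab \in El.
Proof. by apply: map_f; rewrite mem_enum. Qed.

Hypothesis Sq : forall m, mpw Edg s.+1 (m + Em)%MM ->
  exists g : mon, [/\ forall j, (g j <= 1)%N, (g <= m)%MM & mpw Edg s.+1 (g + Em)%MM].

Lemma noself_El : NoSelf El.
Proof.
move=> w P hP hu.
have := ecp_Pk El_isE hP hu; rewrite size_El msum_El => /Pk_mpw /Sq [g [g1 gle hg]].
move/Pk_mpw: hg => [X [sX _ hX]].
have := mdeg_le hX; rewrite mdeg_msum mdegD -msum_El mdeg_msum size_El sX => hd.
have : (mdeg g <= 1)%N.
  have : (g <= U_(w))%MM.
    apply/mnm_lepP => j; move: (g1 j) (mnm_lepP gle j); rewrite !mnmDE !mnm1E.
    by case: (w == j) => /=; lia.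
  by move/mdeg_le; rewrite mdeg1.
lia.
Qed.

Lemma noself_cons F : ab \in F -> NoSelf F -> NoSelf (ab :: F).
Proof.
move=> abF hns w P hP hu; have [P' [h1 h2]] := Core abF hns hP hu.
exact: hns h1 h2.
Qed.

Definition Fj j := nseq j ab ++ El.

Lemma Fj_isE j : all isE (Fj j).
Proof. by rewrite all_cat El_isE andbT all_nseq /isE he orbT. Qed.

Lemma ab_Fj j : ab \in Fj j.
Proof. by rewrite mem_cat ab_El orbT. Qed.

Lemma noself_Fj j : NoSelf (Fj j).
Proof.
elim: j => [|j IH]; first exact: noself_El.
exact: noself_cons (@ab_Fj j) IH.
Qed.

Lemma step j m : Pk (size (Fj j.+1)).+1 (m + msum (Fj j.+1))%MM ->
  Pk (size (Fj j)).+1 (m + msum (Fj j))%MM.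
Proof.
case=> X [sX hX hle].
have hs : (size (Fj j.+1) < size X)%N by rewrite sX.
have [u [v [P [h1 h2 h3]]]] := BT (@Fj_isE j.+1) hX hs hle.
have [P' [h1' h2']] := Core (@ab_Fj j) (@noself_Fj j) h1 h2.
apply: Pk_le (ecp_Pk (@Fj_isE j) h1' h2') _.
by apply: lem_add2 => //; apply: lepm_refl.
Qed.

Lemma descend j m : Pk (size (Fj j)).+1 (m + msum (Fj j))%MM -> Pk s.+1 (m + Em)%MM.
Proof.
elim: j => [|j IH] h; last exact: IH (step h).
by move: h; rewrite /Fj /= size_El msum_El.
Qed.

Lemma Pk_Jpw k z : Pk k z -> mpw (Jset ab) k z.
Proof.
elim: k z => [|k IH] z //.
case/Pk_split => f [Z [hf sZ hZ hle]]; exists (ev f), (msum Z); split => //.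
- exact: Jset_edge.
- by apply: IH; exists Z; split => //; apply: lepm_refl.
Qed.

Lemma Jpw_Pk k y : mpw (Jset ab) k y -> Pk (2 * k) (y + msum (nseq k ab))%MM.
Proof.
elim: k y => [|k IH] y.
  move=> _; exists [::]; split => //; rewrite msum_nil.
  by apply/mnm_lepP => i; rewrite mnm0E.
case=> a [b [ha hb hab]].
have := Pk_add ha (IH _ hb); rewrite mulnS add2n.
move/Pk_le; apply; rewrite /= msum_cons.
move/mnm_lepP: hab => hab; apply/mnm_lepP => j; move: (hab j); rewrite !mnmDE.
genmon; clearall; lia.
Qed.

Theorem comb m : mpw Edg s.+1 (m + Em)%MM <-> mpw (Jset ab) s (m + E'm)%MM.
Proof.
split.
  move/Pk_mpw => h.
  have h' : Pk s.-1.+2 ((m + E'm) + ev ab)%MM.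
    rewrite prednK //; apply: Pk_le h _; rewrite EmE.
    apply/mnm_lepP => j; rewrite !mnmDE; genmon; clearall; lia.
  have [y [z [hy hz hyz]]] := GL (he i0) h'.
  rewrite -(prednK s_pos) /=; exists y, z; split => //.
  exact: Pk_Jpw.
move/Jpw_Pk => h; apply/Pk_mpw; apply: (@descend s.-1).
have -> : (size (Fj s.-1)).+1 = 2 * s by rewrite size_cat size_nseq size_El; lia.
apply: Pk_le h _; rewrite msum_cat msum_El EmE -{1}(prednK s_pos) /= msum_cons.
apply/mnm_lepP => j; rewrite !mnmDE; genmon; clearall; lia.
Qed.

End Main.
End Comb.

Import GRing.Theory.
Local Open Scope ring_scope.

Section Alg.
Variables (n : nat) (K : fieldType).
Local Notation P := {mpoly K[n]}.
Local Notation mon := ('X_{1..n}).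

Definition MI (M : mon -> Prop) : P -> Prop :=
  fun p => forall m, m \in msupp p -> M m.
Definition upc (M : mon -> Prop) := forall m1 m2, (m1 <= m2)%MM -> M m1 -> M m2.

Lemma MI0 M : MI M 0.
Proof. by move=> m; rewrite mcoeff_msupp mcoeff0 eqxx. Qed.

Lemma MID M p q : MI M p -> MI M q -> MI M (p + q).
Proof.
by move=> hp hq m /msuppD_le; rewrite mem_cat => /orP [] ?; [apply: hp | apply: hq].
Qed.

Lemma MIM M p q : upc M -> MI M q -> MI M (p * q).
Proof.
move=> hM hq m /msuppM_le /allpairsP [[m1 m2] [/= _ h2 ->]].
by apply: hM (hq _ h2); rewrite addmC; apply: lem_addr.
Qed.

Lemma MI_gen (S : P -> Prop) M : upc M -> (forall p, S p -> MI M p) ->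
  forall p, ideal_gen S p -> MI M p.
Proof.
move=> hM hS p [gs [hgs ->]]; elim: gs hgs => [|x gs IH] hgs.
  by rewrite big_nil; apply: MI0.
rewrite big_cons; apply: MID.
  by apply: MIM => //; apply: hS; apply: hgs; rewrite inE eqxx.
by apply: IH => y hy; apply: hgs; rewrite inE hy orbT.
Qed.

Lemma ig0 (S : P -> Prop) : ideal_gen S 0.
Proof. by exists [::]; split => //; rewrite big_nil. Qed.

Lemma igD (S : P -> Prop) p q : ideal_gen S p -> ideal_gen S q -> ideal_gen S (p + q).
Proof.
case=> gs1 [h1 ->] [gs2 [h2 ->]]; exists (gs1 ++ gs2); split; last by rewrite big_cat.
by move=> x; rewrite mem_cat => /orP [] ?; [apply: h1 | apply: h2].
Qed.

Lemma igM (S : P -> Prop) c p : ideal_gen S p -> ideal_gen S (c * p).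
Proof.
case=> gs [h ->]; exists [seq (c * x.1, x.2) | x <- gs]; split.
  by move=> x /mapP [y hy ->] /=; apply: h.
by rewrite big_map mulr_sumr; apply: eq_bigr => x _; rewrite mulrA.
Qed.

Lemma ig_mon (S : P -> Prop) m g : S 'X_[g] -> (g <= m)%MM -> ideal_gen S 'X_[m].
Proof.
move=> hS hg; exists [:: ('X_[m - g], 'X_[g])]; split.
  by move=> x; rewrite inE => /eqP ->.
by rewrite big_seq1 /= -mpolyXD submK.
Qed.

Lemma gen_MI (S : P -> Prop) M : (forall m, M m -> ideal_gen S 'X_[m]) ->
  forall p, MI M p -> ideal_gen S p.
Proof.
move=> hX p hp; rewrite {1}(mpolyE p) big_seq; apply: big_ind.
- exact: ig0.
- exact: igD.
by move=> m hm; rewrite -mul_mpolyC; apply: igM; apply: hX; apply: hp.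
Qed.

Lemma MI_X M m : MI M 'X_[m] <-> M m.
Proof.
split; first by move=> h; apply: h; rewrite msuppX mem_seq1.
by move=> h m'; rewrite msuppX mem_seq1 => /eqP ->.
Qed.

Lemma ideal_gen_MI (S : P -> Prop) M : upc M -> (forall p, S p -> MI M p) ->
  (forall m, M m -> ideal_gen S 'X_[m]) -> ideal_eq (ideal_gen S) (MI M).
Proof.
move=> hM hS hX p; split; first exact: MI_gen.
exact: gen_MI.
Qed.

Lemma ieq_trans (I J L : P -> Prop) : ideal_eq I J -> ideal_eq J L -> ideal_eq I L.
Proof. by move=> h1 h2 p; rewrite h1 h2. Qed.

Lemma ieq_sym (I J : P -> Prop) : ideal_eq I J -> ideal_eq J I.
Proof. by move=> h p; rewrite h. Qed.

Lemma ieq_refl (I : P -> Prop) : ideal_eq I I.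
Proof. by []. Qed.

Lemma ideal_gen_ext (S S' : P -> Prop) : (forall p, S p <-> S' p) ->
  ideal_eq (ideal_gen S) (ideal_gen S').
Proof.
move=> h p; split; case=> gs [hg ->]; exists gs; split => // x hx; apply/h; exact: hg.
Qed.

Lemma mul_eq (I I' J J' : P -> Prop) : ideal_eq I I' -> ideal_eq J J' ->
  ideal_eq (ideal_mul I J) (ideal_mul I' J').
Proof.
move=> hI hJ; apply: ideal_gen_ext => p; split.
  by case=> a [b [ha [hb ->]]]; exists a, b; rewrite -hI -hJ.
by case=> a [b [ha [hb ->]]]; exists a, b; rewrite hI hJ.
Qed.

Lemma pow_eq (I I' : P -> Prop) k : ideal_eq I I' ->
  ideal_eq (ideal_pow I k) (ideal_pow I' k).
Proof.
move=> h; elim: k => [|k IH]; first exact: ieq_refl.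
exact: mul_eq h IH.
Qed.

Lemma colon_eq (I I' : P -> Prop) f : ideal_eq I I' ->
  ideal_eq (ideal_colon I f) (ideal_colon I' f).
Proof. by move=> h p; rewrite /ideal_colon h. Qed.

Lemma MI_eq M N : (forall m, M m <-> N m) -> ideal_eq (MI M) (MI N).
Proof. by move=> h p; split => hp m hm; apply/h; apply: hp. Qed.

Lemma upc_msplus M N : upc (msplus M N).
Proof.
move=> m1 m2 h [a [b [ha hb hab]]]; exists a, b; split => //.
exact: lepm_trans h.
Qed.

Lemma upc_mpw M k : upc (mpw M k).
Proof. by case: k => [|k] //; apply: upc_msplus. Qed.

Lemma upc_shift M f : upc M -> upc (fun m => M (m + f)%MM).
Proof.
move=> hM m1 m2 h; apply: hM; apply/mnm_lepP => i; rewrite !mnmDE leq_add2r.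
exact: (mnm_lepP h).
Qed.

Lemma mul_MI M N : ideal_eq (ideal_mul (MI M) (MI N)) (MI (msplus M N)).
Proof.
apply: ideal_gen_MI; first exact: upc_msplus.
  move=> p [a [b [ha [hb ->]]]] m /msuppM_le /allpairsP [[m1 m2] [/= h1 h2 ->]].
  by exists m1, m2; split; [apply: ha | apply: hb | apply: lepm_refl].
move=> m [a [b [ha hb hab]]]; apply: (ig_mon _ hab).
by exists 'X_[a], 'X_[b]; rewrite !MI_X mpolyXD.
Qed.

Lemma one_MI : ideal_eq (ideal_gen (fun p : P => p = 1)) (MI (fun _ => True)).
Proof.
apply: ideal_gen_MI => //.
move=> m _; exists [:: ('X_[m], 1)]; split; first by move=> x; rewrite inE => /eqP ->.
by rewrite big_seq1 mulr1.
Qed.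

Lemma pow_MI M k : upc M -> ideal_eq (ideal_pow (MI M) k) (MI (mpw M k)).
Proof.
move=> hM; elim: k => [|k IH]; first exact: one_MI.
apply: ieq_trans (mul_eq (ieq_refl _) IH) _.
exact: mul_MI.
Qed.

Lemma colon_MI M f : ideal_eq (ideal_colon (MI M) 'X_[f]) (MI (fun m => M (m + f)%MM)).
Proof.
move=> p; rewrite /ideal_colon /MI; split => h m.
  move=> hm; apply: h; rewrite (perm_mem (msuppMX p f)); apply/mapP; exists m => //.
  by rewrite addmC.
by rewrite (perm_mem (msuppMX p f)) => /mapP [m' hm' ->]; rewrite addmC; apply: h.
Qed.

Lemma upc_Edg G : upc (Edg G).
Proof. by move=> m1 m2 h [a [b [hG hab]]]; exists a, b; split => //; apply: lepm_trans h. Qed.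

Lemma edge_MI G : ideal_eq (@edge_ideal n K G) (MI (Edg G)).
Proof.
apply: ideal_gen_MI; first exact: upc_Edg.
  move=> p [a [b [hG ->]]] m; rewrite -mpolyXD msuppX mem_seq1 => /eqP ->.
  by exists a, b; split => //; apply: lepm_refl.
move=> m [a [b [hG hab]]]; apply: (ig_mon _ hab).
by exists a, b; rewrite mpolyXD.
Qed.

Lemma edge_monE f : @edge_mon n K f = 'X_[ev f].
Proof. by rewrite /edge_mon /ev mpolyXD. Qed.

Lemma prod_edge_mon s (e : 'I_s -> 'I_n * 'I_n) (Pr : pred 'I_s) :
  \prod_(j < s | Pr j) @edge_mon n K (e j) =
  'X_[(\big[+%MM/0%MM]_(j < s | Pr j) ev (e j))%MM].
Proof.
rewrite (big_morph _ (@mpolyXD n K) (@mpolyX0 n K)).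
by apply: eq_bigr => j _; rewrite edge_monE.
Qed.

Lemma sq_conv (L : P -> Prop) Lm : ideal_eq L (MI Lm) ->
  squarefree_monomial_ideal L ->
  forall m, Lm m -> exists g : mon, [/\ forall j, (g j <= 1)%N, (g <= m)%MM & Lm g].
Proof.
move=> hL [S [hS hE]] m hm.
have hup : upc (fun m => exists g, S g /\ (g <= m)%MM).
  by move=> m1 m2 h [g [Sg hg]]; exists g; split => //; apply: lepm_trans h.
have := proj1 (hE 'X_[m]) (proj2 (hL _) (proj2 (MI_X _ _) hm)).
have hgen : forall p : P, (exists g, S g /\ p = 'X_[g]) ->
    MI (fun m => exists g, S g /\ (g <= m)%MM) p.
  by move=> p [g [Sg ->]] m'; rewrite msuppX mem_seq1 => /eqP ->; exists g; split => //; apply: lepm_refl.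
move/(MI_gen hup hgen) => h.
have hmX : m \in msupp ('X_[m] : P) by rewrite msuppX mem_seq1.
have [g [Sg gm]] := h m hmX.
exists g; split => //; first exact: hS.
have : L 'X_[g].
  apply: (proj2 (hE _)); exists [:: (1, 'X_[g])]; split; last by rewrite big_seq1 mul1r.
  by move=> x; rewrite inE => /eqP -> /=; exists g.
by move/(proj1 (hL _))/MI_X.
Qed.

End Alg.


Theorem theorem3p8 (K : fieldType) (n : nat) (G : rel 'I_n)
  (s : nat) (e : 'I_s -> 'I_n * 'I_n) :
  simple_graph G ->
  (1 <= s)%N ->
  (forall j, G (e j).1 (e j).2) ->
  squarefree_monomial_ideal
    (ideal_colon (ideal_pow (@edge_ideal n K G) s.+1)
                 (\prod_(j < s) @edge_mon n K (e j))) ->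
  forall i : 'I_s,
    ideal_eq
      (ideal_colon (ideal_pow (@edge_ideal n K G) s.+1)
                   (\prod_(j < s) @edge_mon n K (e j)))
      (ideal_colon
         (ideal_pow (ideal_colon (ideal_pow (@edge_ideal n K G) 2) (@edge_mon n K (e i))) s)
         (\prod_(j < s | j != i) @edge_mon n K (e j))).
Proof.
move=> [Gsym Girr] s1 he hsq i.
rewrite !prod_edge_mon edge_monE in hsq *.
have hL : ideal_eq (ideal_colon (ideal_pow (@edge_ideal n K G) s.+1) 'X_[Em e])
    (MI (fun m => mpw (Edg G) s.+1 (m + Em e)%MM)).
  apply: ieq_trans (colon_eq _ (pow_eq _ (edge_MI G))) _.
  apply: ieq_trans (colon_eq _ (pow_MI _ (@upc_Edg _ G))) _.
  exact: colon_MI.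
have hJ : ideal_eq (ideal_colon (ideal_pow (@edge_ideal n K G) 2) 'X_[ev (e i)])
    (MI (Jset G (e i))).
  apply: ieq_trans (colon_eq _ (pow_eq _ (edge_MI G))) _.
  apply: ieq_trans (colon_eq _ (pow_MI _ (@upc_Edg _ G))) _.
  apply: ieq_trans (colon_MI _ _) _.
  by apply: MI_eq => m; rewrite /Jset Pk_mpw.
have upJ : upc (Jset G (e i)).
  move=> m1 m2 h; rewrite /Jset => hp; apply: Pk_le hp _.
  apply/mnm_lepP => j; rewrite !mnmDE leq_add2r; exact: (mnm_lepP h).
have hR : ideal_eq
    (ideal_colon (ideal_pow (ideal_colon (ideal_pow (@edge_ideal n K G) 2) 'X_[ev (e i)]) s)
       'X_[E'm e i])
    (MI (fun m => mpw (Jset G (e i)) s (m + E'm e i)%MM)).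
  apply: ieq_trans (colon_eq _ (pow_eq _ hJ)) _.
  apply: ieq_trans (colon_eq _ (pow_MI _ upJ)) _.
  exact: colon_MI.
have Sq := sq_conv hL hsq.
apply: ieq_trans hL _; apply: ieq_trans _ (ieq_sym hR).
apply: MI_eq => m; by have := comb Gsym Girr i he s1 Sq m.
Qed.
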